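(* Let $\mathbb{F}\in\{\mathbb{R},\mathbb{C}\}$, let $A\in\mathcal{M}_n(\mathbb{F})$ be Hermitian, and let $\mathbf{v}=(v_1,\dots,v_n)^\top\in\mathbb{F}^n$ be an eigenvector of $A$ whose first entry $v_1$ is real and nonzero. Define $\mathbf{q}_1\coloneqq\mathbf{v}$ and $\mathbf{q}_i\coloneqq \overline{v}_i\,\mathbf{e}_1 - v_1\,\mathbf{e}_i$ for $i=2,\dots,n$, where $\mathbf{e}_1,\dots,\mathbf{e}_n$ is the canonical basis of $\mathbb{F}^n$. Then the matrix $Q=(\mathbf{q}_1\ \mathbf{q}_2\ \cdots\ \mathbf{q}_n)\in\mathcal{M}_n(\mathbb{F})$ whose $i$-th column is $\mathbf{q}_i$ is Hermitian and invertible.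
   Context: $\overline{v}_i$ denotes the complex conjugate of $v_i$. *)

(* Defs.v *)
From HB Require Import structures.
From mathcomp Require Import all_boot all_order all_algebra.
From mathcomp Require Import sesquilinear.
From mathcomp Require Import reals.
From mathcomp Require Import complex.
Set Implicit Arguments. Unset Strict Implicit. Unset Printing Implicit Defensive.
Import Order.TTheory GRing.Theory Num.Theory.
Local Open Scope ring_scope.

(* The matrix Q = (q_1 q_2 ... q_n) of the paper, for vectors of F^(n+1),
   indices shifted to start at 0 (so q_1 is column ord0).  [conj] is the
   conjugation of F (identity for F = R, complex conjugation for F = C). *)
Definition Qmx (F : nzRingType) (conj : F -> F) (n : nat) (v : 'cV[F]_n.+1)
  : 'M[F]_n.+1 :=
  \matrix_(i, j)
    if j == ord0 then v i 0
    else (i == ord0)%:R * conj (v j 0) - (i == j)%:R * v ord0 0.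

(* Main.v *)
Require Import Defs.
From HB Require Import structures.
From mathcomp Require Import all_boot all_order all_algebra.
From mathcomp Require Import sesquilinear reals complex.
Import Order.TTheory GRing.Theory Num.Theory.
Local Open Scope ring_scope.

Lemma sum_delta (F : nzRingType) m (j : 'I_m) (f : 'I_m -> F) :
  \sum_i (i == j)%:R * f i = f j.
Proof.
rewrite (bigD1 j) //= eqxx mul1r big1 ?addr0 // => i /negbTE ->; by rewrite mul0r.
Qed.

Lemma Qmx_unit (F : numFieldType) (conj : F -> F) n (v : 'cV[F]_n.+1) :
  (forall x, 0 <= conj x * x) -> 0 < v ord0 0 * v ord0 0 ->
  Qmx conj v \in unitmx.
Proof.
move=> hc hv0.
have v0n : v ord0 0 != 0 by apply/eqP => h; move: hv0; rewrite h mulr0 ltxx.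
rewrite unitmxE unitfE; apply/negP => /det0P [u u0 uQ].
have Hj : forall j, j != ord0 -> u 0 j * v ord0 0 = u 0 ord0 * conj (v j 0).
  move=> j jn0; have := congr1 (fun M : 'M[F]_(1, n.+1) => M 0 j) uQ; rewrite /Qmx !mxE.

  under eq_bigr => i _ do rewrite mxE (negbTE jn0) mulrBr mulrCA (mulrCA _ (i == j)%:R).
  rewrite sumrB sum_delta sum_delta => /eqP; rewrite subr_eq0 => /eqP <-.
  by [].
have H0 : \sum_i u 0 i * v i 0 = 0.
  have := congr1 (fun M : 'M[F]_(1, n.+1) => M 0 ord0) uQ; rewrite /= !mxE => H; rewrite -[RHS]H.
  by apply: eq_bigr => i _; rewrite /Qmx !mxE eqxx.
have : u 0 ord0 * (v ord0 0 * v ord0 0 + \sum_(i < n) conj (v (lift ord0 i) 0) * v (lift ord0 i) 0) = (\sum_i u 0 i * v i 0) * v ord0 0.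
  rewrite big_distrl big_ord_recl /= mulrDr !mulrA; congr (_ + _); rewrite big_distrr; apply: eq_bigr => i _ /=.
  by rewrite mulrAC Hj // mulrA.
rewrite H0 mul0r => /eqP; rewrite mulf_eq0 => /orP [/eqP u00|].
  apply: (negP u0); apply/eqP/rowP => j; rewrite mxE.
  have [->|jn0] := eqVneq j ord0; first by rewrite (_ : (0 : 'I_1) = ord0) ?u00 //; apply/val_inj.
  have := Hj j jn0; rewrite u00 mul0r => /eqP; rewrite mulf_eq0 (negbTE v0n) orbF => /eqP.
  by rewrite (_ : (0 : 'I_1) = ord0) //; apply/val_inj.
apply/negP; rewrite gt_eqF // ltr_wpDr //; by apply: sumr_ge0 => i _.
Qed.

Theorem lemma4p1 (R : realType) :
  (forall (n : nat) (A : 'M[R]_n.+1) (v : 'cV[R]_n.+1),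
      A \is symmetricmx ->
      v != 0 -> (exists lambda : R, A *m v = lambda *: v) ->
      v ord0 0 != 0 ->
      Qmx idfun v \is symmetricmx /\ Qmx idfun v \in unitmx) /\
  (forall (n : nat) (A : 'M[R[i]]_n.+1) (v : 'cV[R[i]]_n.+1),
      A \is hermsymmx ->
      v != 0 -> (exists lambda : R[i], A *m v = lambda *: v) ->
      v ord0 0 \is Num.real -> v ord0 0 != 0 ->
      Qmx Num.conj v \is hermsymmx /\ Qmx Num.conj v \in unitmx).
Proof.
split.
  move=> n A v _ _ _ v0; split.
    apply/is_hermitianmxP; rewrite expr0 scale1r; apply/matrixP => i j; rewrite /Qmx !mxE /=.
    have [->|i0] := eqVneq i ord0; have [->|j0] := eqVneq j ord0;
      rewrite ?eqxx ?(negbTE i0) ?(negbTE j0) //= ?[ord0 == _]eq_sym ?(negbTE i0) ?(negbTE j0)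
        ?mul1r ?mul0r ?subr0 ?sub0r //.
    by rewrite eq_sym.
  apply: Qmx_unit => [x|]; first exact: sqr_ge0.
  by rewrite lt_def sqr_ge0 mulf_neq0.
move=> n A v _ _ _ v0r v0; split.
  apply/is_hermitianmxP; rewrite expr0 scale1r; apply/matrixP => i j; rewrite /Qmx !mxE /=.
  have [->|i0] := eqVneq i ord0; have [->|j0] := eqVneq j ord0;
    rewrite ?eqxx ?(negbTE i0) ?(negbTE j0) //= ?[ord0 == _]eq_sym ?(negbTE i0) ?(negbTE j0)
      ?mul1r ?mul0r ?subr0 ?sub0r ?rmorphN ?conjCK ?(conj_Creal v0r) //.
  by rewrite rmorphM rmorph_nat eq_sym; congr (- (_ * _)); symmetry; exact: (conj_Creal v0r).
apply: Qmx_unit => [x|]; first by rewrite mulrC mul_conjC_ge0.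
rewrite -{1}(conj_Creal v0r) mulrC lt_def mul_conjC_ge0 andbT mulf_neq0 //.
by rewrite conjC_eq0.
Qed.
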